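(* Let $\mathcal P,\mathcal Q$ be two matroids on the same finite ground set, and let $\mathcal D=\mathcal P\cap\mathcal Q$. Let $S,T\in\mathcal D$ be two sets of the same size $g$. Then there exist an ordering $s_1,\ldots,s_g$ of the elements of $S$ and an ordering $t_1,\ldots,t_g$ of the elements of $T$ such that for every $i=1,\ldots,g$ the set $S-s_1+t_1-s_2+t_2-\cdots+t_{i-1}-s_i$ belongs to $\mathcal D$, where the operations are performed left to right, $X+x$ denotes $X\cup\{x\}$ and $X-a$ denotes $X\setminus\{a\}$.
   Context: A simplicial complex is a family of subsets of a ground set closed under taking subsets. A matroid is a complex in which, for every subset $W$ of the ground set, all maximal members contained in $W$ have the same size. $\mathcal D=\mathcal P\cap\mathcal Q$ means $A\in\mathcal D$ iff $A\in\mathcal P$ and $A\in\mathcal Q$. *)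

(* Defs.v *)
From mathcomp Require Import all_boot.
Set Implicit Arguments. Unset Strict Implicit. Unset Printing Implicit Defensive.

(* Ground set: the finite type T (all of it). A family of subsets is a {set {set T}}. *)

Definition complex (T : finType) (P : {set {set T}}) : Prop :=
  forall A B : {set T}, B \subset A -> A \in P -> B \in P.

Definition matroid (T : finType) (P : {set {set T}}) : Prop :=
  complex P /\
  forall W A B : {set T},
    maxset (fun X => (X \in P) && (X \subset W)) A ->
    maxset (fun X => (X \in P) && (X \subset W)) B ->
    #|A| = #|B|.

(* exch_prefix S s t i = S - s_1 + t_1 - s_2 + t_2 - ... - s_i + t_i,
   operations performed left to right (i full exchange steps). *)
Definition exch_prefix (T : finType) (S : {set T}) (s t : seq T) (i : nat) : {set T} :=
  foldl (fun X p => (X :\ p.1) :|: [set p.2]) S (zip (take i s) (take i t)).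

(* Main.v *)
Require Import Defs.
From mathcomp Require Import all_boot zify.
Set Implicit Arguments. Unset Strict Implicit. Unset Printing Implicit Defensive.
Section M.
Variable T : finType.

Lemma max_ext (P : {set {set T}}) (W C : {set T}) :
  C \in P -> C \subset W ->
  exists M, [/\ maxset (fun X => (X \in P) && (X \subset W)) M, C \subset M,
              M \in P & M \subset W].
Proof.
move=> CP CW.
have pC : (C \in P) && (C \subset W) by rewrite CP CW.
case: (@maxset_exists _ (fun X => (X \in P) && (X \subset W)) C pC) => M mM CM; exists M; split=> //;
  by case/andP: (maxsetp mM).
Qed.

Lemma augment (P : {set {set T}}) (Z U : {set T}) :
  matroid P -> Z \in P -> U \in P -> #|Z| < #|U| ->
  exists2 t, t \in U :\: Z & Z :|: [set t] \in P.
Proof.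
move=> [cP mP] ZP UP lt.
have [MZ [mZ ZM MZP MZW]] := max_ext ZP (subsetUl Z U).
have [MU [mU UM MUP MUW]] := max_ext UP (subsetUr Z U).
have e := mP _ _ _ mZ mU.
have : ~~ (MZ \subset Z).
  apply/negP=> sub; have := subset_leq_card sub; have := subset_leq_card UM.
  rewrite -e => h1 h2; have := leq_trans h1 h2; by rewrite leqNgt lt.
case/subsetPn=> t tM tZ; exists t.
  rewrite inE tZ /=; have := subsetP MZW t tM; by rewrite inE (negbTE tZ).
apply: (cP MZ) => //; by rewrite subUset ZM sub1set tM.
Qed.

Lemma exchange (Q : {set {set T}}) (Z C : {set T}) (t : T) :
  matroid Q -> Z \in Q -> C \subset Z -> C :|: [set t] \in Q -> t \notin Z ->
  Z :|: [set t] \notin Q ->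
  exists2 s, s \in Z :\: C & (Z :\ s) :|: [set t] \in Q.
Proof.
move=> [cQ mQ] ZQ CZ CtQ tZ WQ.
set W := Z :|: [set t].
have [M [mM CM MQ MW]] := max_ext CtQ (setSU [set t] CZ).
have mZ : maxset (fun X => (X \in Q) && (X \subset W)) Z.
  apply/maxsetP; split; first by rewrite ZQ subsetUl.
  move=> B /andP[BQ BW] ZB; apply/eqP; rewrite eqEsubset ZB andbT.
  apply/subsetP=> x xB; case: (boolP (x \in Z)) => // xZ.
  have : x \in W := subsetP BW x xB.
  rewrite inE (negbTE xZ) /= => /set1P ex; subst x.
  have : W \subset B by rewrite subUset ZB sub1set.
  move=> WB; have := cQ _ _ WB BQ; by rewrite (negbTE WQ).
have e := mQ _ _ _ mM mZ.
have : ~~ (W \subset M).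
  apply/negP=> WM; have : M = W by apply/eqP; rewrite eqEsubset MW WM.
  by move=> eMW; move: MQ; rewrite eMW (negbTE WQ).
case/subsetPn=> s sW sM.
have sZ : s \in Z.
  move: sW; rewrite inE => /orP[//|/set1P es]; subst s.
  by move: sM; rewrite (subsetP CM) // inE set11 orbT.
exists s.
  rewrite inE sZ andbT; apply/negP=> sC; by move: sM; rewrite (subsetP CM) // inE sC.
have MWs : M \subset W :\ s.
  apply/subsetP=> x xM; rewrite in_setD1 (subsetP MW) // andbT.
  by apply/eqP=> ex; rewrite -ex xM in sM.
have cardW : #|W| = #|Z|.+1 by rewrite /W setUC cardsU1 tZ add1n.
have eM : M = W :\ s.
  apply/eqP; rewrite eqEcard MWs /=.
  have := cardsD1 s W; rewrite sW cardW e add1n => -[->]; by [].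
have -> : (Z :\ s) :|: [set t] = W :\ s.
  apply/setP=> x; rewrite !inE; case: (eqVneq x t) => [->|xt] /=.
    rewrite !orbT andbT; apply/esym/eqP => ts; by rewrite ts sZ in tZ.
  by rewrite !orbF.
by rewrite -eM.
Qed.
End M.
Lemma exch_formula (T : finType) (S : {set T}) (s t : seq T) (x0 : T) (i : nat) :
  i <= size s -> i <= size t ->
  (forall l, l < i -> nth x0 s l \notin take l t) ->
  exch_prefix S s t i = (S :\: [set x in take i s]) :|: [set x in take i t].
Proof.
elim: i => [|i IH] hs ht hn.
  rewrite /exch_prefix !take0 /=.
  by apply/setP=> x; rewrite !inE in_nil orbF.
rewrite /exch_prefix (take_nth x0 hs) (take_nth x0 ht) zip_rcons; last first.
  by rewrite !size_takel // ltnW.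
rewrite foldl_rcons -/(exch_prefix S s t i) IH ?(ltnW hs) ?(ltnW ht) //; last first.
  by move=> l li; apply: hn; rewrite ltnS ltnW.
have ha := hn i (ltnSn i).
apply/setP=> x /=; rewrite !inE !mem_rcons !in_cons.
case: (eqVneq x (nth x0 t i)) => [->|xb] /=; first by rewrite !orbT.
rewrite !orbF; case: (eqVneq x (nth x0 s i)) => [ex|xa] /=.
  by subst x; rewrite (negbTE ha).
by [].
Qed.
Lemma step (T : finType) (P Q : {set {set T}}) (Z C U : {set T}) (x : T) :
  matroid P -> matroid Q -> Z \in P :&: Q -> U \in P :&: Q ->
  C \subset Z -> C \subset U -> #|Z| < #|U| -> x \in Z :\: C ->
  exists s t, [/\ s \in Z :\: C, t \in U :\: Z & (Z :\ s) :|: [set t] \in P :&: Q].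
Proof.
move=> mP mQ ZD UD CZ CU lt xZC; move: ZD UD; rewrite !in_setI => /andP[ZP ZQ] /andP[UP UQ].
have [t tUZ ZtP] := augment mP ZP UP lt.
have tZ : t \notin Z by move: tUZ; rewrite inE => /andP[].
have tU : t \in U by move: tUZ; rewrite inE => /andP[].
have sub : forall s, (Z :\ s) :|: [set t] \subset Z :|: [set t].
  by move=> s; apply: setSU; apply: subsetDl.
case: (boolP (Z :|: [set t] \in Q)) => ZtQ.
  exists x, t; split => //; rewrite in_setI.
  by rewrite (mP.1 _ _ (sub x) ZtP) (mQ.1 _ _ (sub x) ZtQ).
have CtQ : C :|: [set t] \in Q.
  apply: (mQ.1 U) => //; by rewrite subUset CU sub1set.
have [s sZC sQ] := exchange mQ ZQ CZ CtQ tZ ZtQ.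
exists s, t; split => //; rewrite in_setI sQ andbT.
exact: (mP.1 _ _ (sub s) ZtP).
Qed.

Section Build.
Variables (T : finType) (P Q : {set {set T}}) (S U : {set T}) (g : nat) (x0 : T).
Hypotheses (mP : matroid P) (mQ : matroid Q) (SD : S \in P :&: Q) (UD : U \in P :&: Q)
  (cS : #|S| = g) (cU : #|U| = g) (x0S : x0 \in S).

Definition Dset (ps pt : seq T) := (S :\: [set x in ps]) :|: [set x in pt].

Definition Inv i (ps pt : seq T) :=
  [/\ size ps = i.+1, size pt = i, uniq ps, uniq pt &
   [/\ {subset ps <= S} /\ {subset pt <= U},
      (forall x, x \in pt -> x \in S -> x \in ps),
      (forall l, l < i.+1 -> nth x0 ps l \notin take l pt) &
      (forall j, j <= i -> Dset (take j.+1 ps) (take j pt) \in P :&: Q)]].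

Lemma build i : i < g -> exists ps pt, Inv i ps pt.
Proof.
elim: i => [|i IH] ig.
  exists [:: x0], [::]; split => //; split => //.
  - by split=> x //; rewrite inE => /eqP ->.
  - move=> j; rewrite leqn0 => /eqP -> /=.
    have sub : Dset [:: x0] [::] \subset S.
      by apply/subsetP=> x; rewrite !inE in_nil orbF => /andP[].
    move: SD; rewrite !inE => /andP[SP SQ].
    by rewrite (mP.1 _ _ sub SP) (mQ.1 _ _ sub SQ).
have [ps [pt [sps spt ups upt [[sS sU] disj nc DD]]]] := IH (ltnW ig).
set Z := Dset ps pt.
have ZD : Z \in P :&: Q.
  have := DD i (leqnn i); by rewrite -{1}sps -spt !take_size.
have cps : #|[set x in ps]| = i.+1 by rewrite cardsE; move/card_uniqP: (ups) => ->.
have cpt : #|[set x in pt]| = i by rewrite cardsE; move/card_uniqP: (upt) => ->.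
have psS : [set x in ps] \subset S by apply/subsetP=> x; rewrite inE; apply: sS.
have cSD : #|S :\: [set x in ps]| = g - i.+1.
  by rewrite cardsD (setIidPr psS) cps cS.
have cZ : #|Z| < #|U|.
  rewrite cU; apply: (leq_ltn_trans (leq_card_setU _ _)); rewrite cSD cpt.
  lia.
have [x xSD] : exists x, x \in S :\: [set x in ps].
  apply/set0Pn; rewrite -card_gt0 cSD; lia.
have xZC : x \in Z :\: [set x in pt].
  rewrite inE !inE; move: xSD; rewrite !inE => /andP[xps xS].
  rewrite xps xS /= andbT; apply/negP=> xpt.
  by move: (disj x xpt xS); rewrite (negbTE xps).
have CZ : [set x in pt] \subset Z by apply: subsetUr.
have CU : [set x in pt] \subset U by apply/subsetP=> y; rewrite inE; apply: sU.
have [s [t [sZC tUZ sD]]] := step mP mQ ZD UD CZ CU cZ xZC.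
move: sZC; rewrite !inE => /andP[snpt /orP[/andP[snps sS']|spt']]; last by rewrite spt' in snpt.
move: tUZ; rewrite !inE negb_or negb_and negbK => /andP[/andP[tSps tpt] tU].
have st : s != t by apply/eqP=> est; move: tSps; rewrite -est (negbTE snps) sS'.
exists (rcons ps s), (rcons pt t); split.
- by rewrite size_rcons sps.
- by rewrite size_rcons spt.
- by rewrite rcons_uniq snps ups.
- by rewrite rcons_uniq tpt upt.
split.
- split=> y; rewrite mem_rcons in_cons => /orP[/eqP ->|]//; [exact: sS | exact: sU].
- move=> y; rewrite !mem_rcons !in_cons => /orP[/eqP ->|ypt] yS.
    by move: tSps; rewrite yS orbF => ->; rewrite orbT.
  by rewrite (disj y ypt yS) orbT.
- move=> l; rewrite ltnS leq_eqVlt => /orP[/eqP ->|lt].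
    rewrite nth_rcons sps ltnn eqxx take_oversize ?size_rcons ?spt //.
    by rewrite mem_rcons in_cons negb_or st snpt.
  rewrite nth_rcons sps lt -cats1 takel_cat ?spt //.
  exact: nc.
- move=> j; rewrite leq_eqVlt => /orP[/eqP ->|lt].
    rewrite !take_oversize ?size_rcons ?sps ?spt //.
    have -> : Dset (rcons ps s) (rcons pt t) = (Z :\ s) :|: [set t] .
      apply/setP=> y; rewrite /Dset /Z !inE !mem_rcons !in_cons.
      case: (eqVneq y s) => [->|ys] /=; first by rewrite (negbTE snpt) (negbTE st).
      by rewrite -orbA [(y == t) || _]orbC.
    exact: sD.
  have ji : j <= i by rewrite -ltnS.
  rewrite -!cats1 takel_cat ?sps // takel_cat ?spt //.
  exact: DD.
Qed.
End Build.

Theorem theorem3p1 (T : finType) (P Q : {set {set T}}) :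
  matroid P -> matroid Q ->
  forall (S U : {set T}) (g : nat),
    S \in P :&: Q -> U \in P :&: Q -> #|S| = g -> #|U| = g ->
    exists (s t : g.-tuple T),
      [/\ uniq s, [set x in s] = S, uniq t, [set x in t] = U &
        forall i : 'I_g, exch_prefix S s t i :\ tnth s i \in P :&: Q].
Proof.
move=> mP mQ S U [|n] SD UD cS cU.
  have S0 : S = set0 by apply: cards0_eq.
  have U0 : U = set0 by apply: cards0_eq.
  exists [tuple], [tuple]; split => //; last by case.
have [x0 x0S] : exists x0, x0 \in S by apply/set0Pn; rewrite -card_gt0 cS.
have [ps [pt [sps spt ups upt [[sS sU] disj nc DD]]]] :=
  build mP mQ SD UD cS cU x0S (ltnSn n).
have cpt : #|[set x in pt]| = n by rewrite cardsE; move/card_uniqP: (upt) => ->.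
have [tl tlU] : exists tl, tl \in U :\: [set x in pt].
  apply/set0Pn; rewrite -card_gt0 cardsD.
  have -> : U :&: [set x in pt] = [set x in pt].
    by apply/setIidPr/subsetP=> y; rewrite inE; apply: sU.
  rewrite cpt cU; lia.
move: tlU; rewrite !inE => /andP[tlpt tlU].
have sps' : size ps == n.+1 by rewrite sps.
have spt' : size (rcons pt tl) == n.+1 by rewrite size_rcons spt.
exists (Tuple sps'), (Tuple spt'); split => /=.
- exact: ups.
- apply/eqP; rewrite eqEcard; apply/andP; split.
    by apply/subsetP=> y; rewrite inE; apply: sS.
  by rewrite cS cardsE; move/card_uniqP: (ups) => ->; rewrite sps.
- by rewrite rcons_uniq tlpt upt.
- apply/eqP; rewrite eqEcard; apply/andP; split.
    apply/subsetP=> y; rewrite inE mem_rcons in_cons => /orP[/eqP ->//|]; apply: sU.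
  rewrite cU cardsE; move/card_uniqP: (rcons_uniq pt tl); rewrite tlpt upt /= => ->.
  by rewrite size_rcons spt.
move=> i.
have ii : (i : nat) <= n by rewrite -ltnS.
have tk : take i (rcons pt tl) = take i pt by rewrite -cats1 takel_cat ?spt.
have h1 : (i : nat) <= size ps by rewrite sps; lia.
have h2 : (i : nat) <= size (rcons pt tl) by rewrite size_rcons spt; lia.
have h3 : forall l, l < i -> nth x0 ps l \notin take l (rcons pt tl).
  move=> l li; rewrite -cats1 takel_cat ?spt; last by lia.
  by apply: nc; lia.
rewrite (tnth_nth x0) /= (@exch_formula T S _ _ x0 i h1 h2 h3).
rewrite tk.
have hi := nc i (ltn_ord i).
have -> : ((S :\: [set x in take i ps]) :|: [set x in take i pt]) :\ nth x0 ps i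
          = Dset S (take i.+1 ps) (take i pt).
  apply/setP=> y; rewrite /Dset (take_nth x0) ?sps // !inE mem_rcons in_cons.
  case: (eqVneq y (nth x0 ps i)) => [->|yn] /=; last by [].
  by rewrite (negbTE hi).
exact: DD.
Qed.
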